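(* Let $r\ge 4$ and let $w:E(K_r)\to\mathbb{R}_{>0}$ be a positive edge-weighting of the complete graph $K_r$ on vertex set $U$ which is vertex-induced, i.e. there is $a:U\to\mathbb{R}_{\ge0}$ with $w(uv)=\frac{a(u)+a(v)}{2}$ for all edges $uv$. For each edge $e$ let $C_w(e)$ be the maximum of $w(C)=\sum_{f\in E(C)}w(f)$ over all cycles $C$ of $K_r$ containing $e$. Then $$\sum_{e\in E(K_r)}\frac{w(e)}{C_w(e)}=\frac{r-1}{2}.$$ *)

(* Defs.v *)
From HB Require Import structures.
From mathcomp Require Import all_boot all_order all_algebra.
Set Implicit Arguments. Unset Strict Implicit. Unset Printing Implicit Defensive.
Import Order.TTheory GRing.Theory Num.Theory.
Local Open Scope ring_scope.

Section Defs.
Variables (R : realFieldType) (U : finType).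

Definition vweight (a : U -> R) (e : {set U}) : R := (\sum_(x in e) a x) / 2.

(* a cycle of length k is a k-tuple of pairwise distinct vertices, k >= 3;
   its i-th edge joins t_i and t_{i+1 mod k} *)
Definition cyc_edge k (t : k.-tuple U) (i : 'I_k) : {set U} :=
  [set tnth t i; tnth t (ordS i)].

Definition is_cycle k (t : k.-tuple U) : bool := (3 <= k)%N && uniq t.

Definition cycle_contains k (t : k.-tuple U) (e : {set U}) : bool :=
  [exists i : 'I_k, cyc_edge t i == e].

Definition cycle_weight (a : U -> R) k (t : k.-tuple U) : R :=
  \sum_(i < k) vweight a (cyc_edge t i).

(* C_w(e): maximum weight of a cycle of K_U containing e
   (cycles have at most #|U| vertices) *)
Definition Cw (a : U -> R) (e : {set U}) : R :=
  \big[Num.max/0]_(k < #|U|.+1)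
     \big[Num.max/0]_(t : k.-tuple U | is_cycle t && cycle_contains t e)
        cycle_weight a t.
End Defs.

(* Main.v *)
Require Import Defs.
From HB Require Import structures.
From mathcomp Require Import all_boot all_order all_algebra.
From mathcomp Require Import ring.
Import Order.TTheory GRing.Theory Num.Theory.
Local Open Scope ring_scope.

Section Aux.
Variables (R : realFieldType) (U : finType) (a : U -> R).

Lemma vw2 (u v : U) : u != v -> vweight a [set u; v] = (a u + a v) / 2.
Proof. by move=> uv; rewrite /vweight big_setU1 ?big_set1 // in_set1. Qed.

Lemma ordS_neq k (i : 'I_k) : (3 <= k)%N -> i != ordS i.
Proof.
move=> k3; apply/eqP => /(congr1 val) /=.
case: (ltnP i.+1 k) => h.
  by rewrite modn_small // => /eqP; rewrite eqn_leq ltnn andbF.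
have ek : i.+1 = k by apply/eqP; rewrite eqn_leq h ltn_ord.
by rewrite ek modnn => ei; move: ek; rewrite ei => ek; rewrite -ek in k3.
Qed.

Lemma cycw k (t : k.-tuple U) : is_cycle t ->
  cycle_weight a t = \sum_(i < k) a (tnth t i).
Proof.
move=> /andP[k3 ut]; rewrite /cycle_weight.
have ne i : tnth t i != tnth t (ordS i).
  apply/negP => /eqP /((elimT (tuple_uniqP t)) ut) h.
  by move: (@ordS_neq _ i k3); rewrite -h eqxx.
rewrite (eq_bigr (fun i => (a (tnth t i) + a (tnth t (ordS i))) / 2)); last first.
  by move=> i _; rewrite /cyc_edge vw2.
rewrite -big_distrl /= big_split /=.
have -> : \sum_(i < k) a (tnth t (ordS i)) = \sum_(i < k) a (tnth t i).
  by rewrite [RHS](reindex_inj (@ordS_inj k)).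
by set X := \sum_(i < k) _; field.
Qed.

Lemma sumt k (t : k.-tuple U) : uniq t ->
  \sum_(i < k) a (tnth t i) = \sum_(x in t) a x.
Proof. by move=> ut; rewrite -big_uniq // big_tuple. Qed.

End Aux.

Theorem proposition3p2 (R : realFieldType) (U : finType) (a : U -> R)
  (hr : (4 <= #|U|)%N)
  (ha : forall u, 0 <= a u)
  (hw : forall u v, u != v -> 0 < vweight a [set u; v]) :
  \sum_(e : {set U} | #|e| == 2%N) vweight a e / Cw a e
    = (#|U|%:R - 1) / 2.
Proof.
set S := \sum_x a x.
have S0 : 0 <= S by apply: sumr_ge0.
have Cwe : forall e : {set U}, #|e| == 2%N -> Cw a e = S.
  move=> e /cards2P [u [v [uv ->]]].
  apply/le_anti/andP; split.
    apply: bigmax_le => // k _; apply: bigmax_le => // t /andP[ct _].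
    rewrite cycw // sumt; last by case/andP: ct.
    rewrite [S](bigID (mem t)) /= lerDl; exact: sumr_ge0.
  pose s := u :: v :: enum (~: [set u; v]).
  have hs : size s == #|U|.
    by rewrite /= -cardE -(cardsC [set u; v]) cards2 uv.
  have us : uniq s.
    rewrite /= !inE mem_enum !inE. by rewrite mem_enum !inE !eqxx (negbTE uv) orbT enum_uniq.
  pose t := Tuple hs.
  have h0 : (0 < #|U|)%N by apply: leq_trans hr.
  apply: (le_trans _ (le_bigmax 0 _ (@ord_max #|U|))).
  have ct : is_cycle t by rewrite /is_cycle (leq_trans _ hr).
  apply: (le_trans _ (@le_bigmax_cond _ _ _ 0 t _ _ _)); last first.
    rewrite ct /=; apply/existsP; exists (Ordinal h0).
    rewrite /cyc_edge !(tnth_nth u) /= modn_small //.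
    by apply: leq_trans hr.
  rewrite cycw // sumt // le_eqVlt; apply/orP; left; apply/eqP.
  apply: eq_bigl => x; rewrite /= !inE mem_enum !inE.
  by case: (x == u); case: (x == v).
have Sn0 : S != 0.
  have [u [v [_ _ uv]]] : exists u v, [/\ u \in U, v \in U & u != v].
    apply/card_gt1P; exact: leq_trans hr.
  apply/negP => /eqP /(psumr_eq0P (fun i _ => ha i)) h.
  by move: (hw u v uv); rewrite vw2 // !h // addr0 mul0r ltxx.
rewrite (eq_bigr (fun e => vweight a e / S)); last by move=> e /Cwe ->.
rewrite -big_distrl /= /vweight -big_distrl /=.
rewrite (exchange_big_dep predT) //=.
have H x : \sum_(e : {set U} | (#|e| == 2%N) && (x \in e)) a x = a x *+ (#|U|.-1).
  rewrite (eq_bigl (mem [set e : {set U} | (#|e| == 2%N) && (x \in e)])); last first.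
    by move=> e; rewrite /= inE.
  rewrite sumr_const.
  have -> : [set e : {set U} | (#|e| == 2%N) && (x \in e)] =
            (fun y => [set x; y]) @: [set~ x].
    apply/setP => e; rewrite inE; apply/idP/idP.
      case/andP => /cards2P [y1 [y2 [y12 ->]]].
      rewrite !inE => /orP [] /eqP ->.
        by apply/imsetP; exists y2; rewrite // !inE eq_sym.
      by apply/imsetP; exists y1; rewrite 1?setUC // !inE.
    case/imsetP => y; rewrite !inE => yx ->.
    move: yx; rewrite cards2 set21 andbT eq_sym; by move=> ->.
  rewrite card_in_imset ?cardsC1 //.
  move=> y1 y2; rewrite !inE => y1x y2x e.
  have : y1 \in [set x; y2] by rewrite -e !inE eqxx orbT.
  by rewrite !inE (negbTE y1x) => /eqP.
rewrite (eq_bigr (fun x => a x *+ (#|U|.-1))); last by move=> x _; exact: H.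
rewrite sumrMnl -/S.
rewrite -[S *+ _]mulr_natr.
have -> : (#|U|.-1)%:R = #|U|%:R - 1 :> R.
  by rewrite -subn1 natrB // (leq_trans _ hr).
by field.
Qed.
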